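(* Assume that the radius distribution $f(r)=\mathbb{P}(R\ge r)$ is a slowly varying function. Then $f(n)T_n\Longrightarrow\mathrm{Exp}(1)$ in distribution as $n\to\infty$, where $\mathbb{P}(\mathrm{Exp}(1)<t)=1-e^{-t}$.
   Context: Covering process: $R$ takes values in $\{1,2,\dots\}$, $f(r)=\mathbb{P}(R\ge r)$ for real $r\ge1$. On $\mathbb{Z}/n\mathbb{Z}$, let $(R_k)$ be i.i.d. copies of $R$, $(U_k)$ i.i.d. uniform on $\mathbb{Z}/n\mathbb{Z}$, independent; $\mathcal{O}_k=\{U_k,\dots,U_k+R_k-1\}$ (mod $n$), $C_0=\emptyset$, $C_k=C_{k-1}\cup\mathcal{O}_k$; with an independent rate-one Poisson process $N(t)$, $X_t=C_{N(t)}$ and $T_n=\inf\{t:X_t=\mathbb{Z}/n\mathbb{Z}\}$. A measurable $U:\mathbb{R}_+\to\mathbb{R}_+$ is regularly varying with index $p$ ($U\in\mathrm{RV}_p$) if $\lim_{x\to\infty}U(xt)/U(x)=t^p$ for all $t>0$; slowly varying means $\mathrm{RV}_0$. *)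

(* Defs.v *)
From HB Require Import structures.
From mathcomp Require Import all_boot all_order all_algebra.
From mathcomp Require Import all_classical all_reals all_analysis.
Set Implicit Arguments. Unset Strict Implicit. Unset Printing Implicit Defensive.
Import Order.TTheory GRing.Theory Num.Theory.
Import numFieldNormedType.Exports.
Local Open Scope classical_set_scope.
Local Open Scope ring_scope.

Section CoverDefs.
Variable R : realType.

(* p k = P(R = k): the law of the radius R, a probability on {1,2,...}. *)
Definition radius_pmf (p : nat -> R) : Prop :=
  [/\ p 0%N = 0, (forall k, 0 <= p k) & series p @ \oo --> (1 : R)].

Definition Rtail (p : nat -> R) (x : R) : R :=
  limn (series (fun k => if x <= k%:R then p k else 0)).

Definition regularly_varying (U : R -> R) (a : R) : Prop :=
  [/\ measurable_fun [set x : R | 0 <= x] U,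
      (forall x, 0 <= x -> 0 <= U x) &
      forall t : R, 0 < t -> (U (x * t) / U x) @[x --> +oo] --> t `^ a].

Definition slowly_varying (U : R -> R) : Prop := regularly_varying U 0.

Definition arc (n : nat) (u : 'I_n) (r : nat) : {set 'I_n} :=
  [set x : 'I_n | [exists i : 'I_r, (val x == (val u + val i) %% n)%N]].

(* Law of min(R, n): index j : 'I_n stands for radius j+1; radius n stands
   for the event R >= n (any radius >= n covers the whole cycle). *)
Definition trunc_weight (p : nat -> R) (n : nat) (j : 'I_n) : R :=
  if (j.+1 < n)%N then p j.+1 else Rtail p n%:R.

(* P(C_k = Z/nZ): U_1..U_k uniform on 'I_n, radii i.i.d., all independent. *)
Definition cover_prob (p : nat -> R) (n k : nat) : R :=
  \sum_(u : {ffun 'I_k -> 'I_n})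
   \sum_(r : {ffun 'I_k -> 'I_n})
     (\prod_(i < k) (n%:R^-1 * trunc_weight p (r i))) *
     (if \big[@finset.setU _/finset.set0]_(i < k) arc (u i) (r i).+1 == finset.setTfor 'I_n then 1 else 0).

(* P(T_n <= s) = P(X_s = Z/nZ) = P(C_{N(s)} = Z/nZ), N Poisson of rate 1,
   independent of the covering sequence. *)
Definition cdf_T (p : nat -> R) (n : nat) (s : R) : R :=
  if s < 0 then 0 else
  limn (series (fun k => expR (- s) * s ^+ k / (k`!)%:R * cover_prob p n k)).

Definition cdf_scaled_T (p : nat -> R) (n : nat) (c t : R) : R :=
  if 0 < c then cdf_T p n (t / c) else (if 0 <= t then 1 else 0).

(* CDF of Exp(1): P(Exp(1) <= t) = P(Exp(1) < t). *)
Definition exp1_cdf (t : R) : R := if 0 <= t then 1 - expR (- t) else 0.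

End CoverDefs.

(* Main.v *)
Require Import Defs.
From HB Require Import structures.
From mathcomp Require Import all_boot all_order all_algebra.
From mathcomp Require Import all_classical all_reals all_analysis.
From mathcomp Require Import ring lra zify.
Import Order.TTheory GRing.Theory Num.Theory.
Import numFieldNormedType.Exports.
Local Open Scope classical_set_scope.
Local Open Scope ring_scope.
Set Implicit Arguments. Unset Strict Implicit. Unset Printing Implicit Defensive.
Section Tail.
Variable R : realType.
Variable p : nat -> R.
Hypothesis p0 : p 0%N = 0.
Hypothesis pge0 : forall k, 0 <= p k.
Hypothesis pcvg : series p @ \oo --> (1 : R).

Lemma series_p_nd : nondecreasing_seq (series p).
Proof. by apply: nondecreasing_series => k _ _; exact: pge0. Qed.

Lemma series_p_le1 n : series p n <= 1.
Proof.
rewrite -(cvg_lim _ pcvg) //; apply: nondecreasing_cvgn_le; first exact: series_p_nd.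
by apply/cvg_ex; exists 1.
Qed.

Lemma series_p_ge0 n : 0 <= series p n.
Proof. by rewrite /series /=; apply: sumr_ge0 => i _; exact: pge0. Qed.

Lemma Rtail_nat m : Rtail p m%:R = 1 - series p m.
Proof.
rewrite /Rtail; apply: cvg_lim => //.
apply: (cvg_trans _ (cvgB pcvg (cvg_cst (series p m)))).
apply: near_eq_cvg; near=> N.
have hN : (m <= N)%N by near: N; exact: nbhs_infty_ge.
rewrite /= /series /=.
change (\sum_(0 <= k < N) p k - \sum_(0 <= k < m) p k = \sum_(0 <= k < N) (if m%:R <= k%:R :> R then p k else 0)).
rewrite (big_cat_nat (leq0n m) hN) /= [in RHS](big_cat_nat (leq0n m) hN) /=.
rewrite [X in _ = X + _]big_nat_cond [X in _ = X + _]big1 ?add0r; last first.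
  by move=> k /andP[/andP[_ km] _]; rewrite ler_nat leqNgt km.
rewrite addrAC subrr add0r; apply: eq_big_nat => k /andP[mk _].
by rewrite ler_nat mk.
Unshelve. all: by end_near. Qed.

Lemma p_series_cvg : cvgn (series p).
Proof. by apply/cvg_ex; exists 1. Qed.

Lemma Rtail_cvg (x : R) : cvgn (series (fun k => if x <= k%:R then p k else 0)).
Proof.
apply: (series_le_cvg _ pge0 _ p_series_cvg) => k; case: ifP => // _; exact: pge0.
Qed.

Lemma Rtail_ge0 (x : R) : 0 <= Rtail p x.
Proof.
apply: limr_ge; first exact: Rtail_cvg.
near=> N; rewrite /series /=; apply: sumr_ge0 => k _; case: ifP => // _; exact: pge0.
Unshelve. all: by end_near. Qed.

Lemma Rtail_le (x y : R) : x <= y -> Rtail p y <= Rtail p x.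
Proof.
move=> xy; apply: ler_lim; try exact: Rtail_cvg.
near=> N; rewrite /series /=; apply: ler_sum => k _.
case: ifP => yk; last by case: ifP => // _; exact: pge0.
by rewrite (le_trans xy yk).
Unshelve. all: by end_near. Qed.

Lemma Rtail_natB m n : (m <= n)%N ->
  Rtail p m%:R - Rtail p n%:R = \sum_(m <= k < n) p k.
Proof.
move=> mn; rewrite !Rtail_nat /series /= (big_cat_nat (leq0n m) mn) /=.
by ring.
Qed.

Lemma Rtail_nat_le1 n : Rtail p n%:R <= 1.
Proof. by rewrite Rtail_nat lerBlDr lerDl series_p_ge0. Qed.

End Tail.
Lemma arc_full n' (u : 'I_n'.+1) : Defs.arc u n'.+1 = finset.setTfor 'I_n'.+1.
Proof.
apply/setP => x; rewrite !inE; apply/existsP.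
have lt : ((x + n'.+1 - u) %% n'.+1 < n'.+1)%N by rewrite ltn_pmod.
exists (Ordinal lt) => /=.
rewrite modnDmr addnBA; last by rewrite (leq_trans (ltnW (ltn_ord u))) // leq_addl.
rewrite addnC addnK modnDr modn_small //.
Qed.

Lemma arc0_count n' m :
  (\sum_(x : 'I_n'.+1) (ord0 \in Defs.arc x m) <= m)%N.
Proof.
apply: (@leq_trans (\sum_(x : 'I_n'.+1) \sum_(i < m) (0 == (x + i) %% n'.+1)%N)).
  apply: leq_sum => x _; rewrite inE; case: existsP => [[i hi]|_] //.
  by rewrite (bigD1 i) //= hi.
rewrite exchange_big /= -[X in (_ <= X)%N]card_ord -sum1_card.
apply: leq_sum => i _.
rewrite (eq_bigr (fun x : 'I_n'.+1 => if (0 == (x + i) %% n'.+1)%N then 1 else 0)%N); last first.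
  by move=> x _; case: ifP.
rewrite -big_mkcond sum1_card /=; apply/card_le1_eqP => x y hx hy.
move: hx hy; rewrite !unfold_in /= => hx hy.
apply: ord_inj; rewrite -(modn_small (ltn_ord x)) -(modn_small (ltn_ord y)).
by apply/eqP; rewrite -(eqn_modDr i); apply/eqP; rewrite -(eqP hx) -(eqP hy).
Qed.
Lemma sum_ffun2_prod (R : comPzRingType) k m (G : 'I_m -> 'I_m -> R) :
  \sum_(u : {ffun 'I_k -> 'I_m}) \sum_(r : {ffun 'I_k -> 'I_m})
     \prod_(i < k) G (u i) (r i) = (\sum_x \sum_j G x j) ^+ k.
Proof.
transitivity (\sum_(u : {ffun 'I_k -> 'I_m}) \prod_(i < k) \sum_j G (u i) j).
  by apply: eq_bigr => u _; rewrite bigA_distr_bigA.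
rewrite -[k in RHS]card_ord -prodr_const bigA_distr_bigA /=.
by [].
Qed.
Section Cover.
Variable R : realType.
Variable p : nat -> R.
Hypothesis p0 : p 0%N = 0.
Hypothesis pge0 : forall k, 0 <= p k.
Hypothesis pcvg : series p @ \oo --> (1 : R).
Variable n' : nat.
Local Notation n := n'.+1.
Local Notation w := (@trunc_weight R p n'.+1).

Lemma w_ge0 j : 0 <= w j.
Proof. by rewrite /trunc_weight; case: ifP => _; [exact: pge0 | exact: Rtail_ge0]. Qed.

Lemma w_max : w ord_max = Rtail p n%:R.
Proof. by rewrite /trunc_weight /= ltnn. Qed.

Lemma w_widen (j : 'I_n') : w (widen_ord (leqnSn n') j) = p j.+1.
Proof. by rewrite /trunc_weight /= ltnS ltn_ord. Qed.

Lemma w_sum : \sum_j w j = 1.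
Proof.
rewrite big_ord_recr /= w_max (Rtail_nat pcvg).
under eq_bigr do rewrite w_widen.
rewrite seriesEord /= big_ord_recl p0 add0r.
have -> : \sum_(i < n') p (lift ord0 i) = \sum_(i < n') p i.+1.
  by apply: eq_bigr => i _; rewrite lift0.
by rewrite addrC subrK.
Qed.

Lemma nV_mass : \sum_(x : 'I_n) \sum_(j : 'I_n) n%:R^-1 * w j = 1.
Proof.
under eq_bigr do rewrite -mulr_sumr w_sum mulr1.
by rewrite sumr_const card_ord -[n%:R^-1 *+ _]mulr_natr mulVf // pnatr_eq0.
Qed.

Definition cov k (u r : {ffun 'I_k -> 'I_n}) : bool :=
  \big[@finset.setU _/finset.set0]_(i < k) Defs.arc (u i) (r i).+1 == finset.setTfor 'I_n.

Definition Gc (x j : 'I_n) : bool := (j == ord_max) || (ord0 \in Defs.arc x j.+1).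

Lemma cover_probE k : cover_prob p n k =
  \sum_(u : {ffun 'I_k -> 'I_n}) \sum_(r : {ffun 'I_k -> 'I_n})
     (\prod_(i < k) (n%:R^-1 * w (r i))) * (if cov u r then 1 else 0).
Proof. by []. Qed.

Lemma term_lb k (u r : {ffun 'I_k -> 'I_n}) :
  \prod_(i < k) (n%:R^-1 * w (r i)) -
  \prod_(i < k) (n%:R^-1 * w (r i) * (if r i != ord_max then 1 else 0))
  <= (\prod_(i < k) (n%:R^-1 * w (r i))) * (if cov u r then 1 else 0).
Proof.
have hge0 : forall j, 0 <= n%:R^-1 * w j :> R.
  by move=> j; rewrite mulr_ge0 ?w_ge0 // invr_ge0 ler0n.
case: ifP => hcov.
  rewrite mulr1 lerBlDr lerDl; apply: prodr_ge0 => i _.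
  by case: ifP => _; rewrite ?mulr1 ?mulr0.
have all : forall i, r i != ord_max.
  move=> i; apply/negP => /eqP hi; move/negP: hcov; apply.
  rewrite /cov -finset.subTset.
  have : Defs.arc (u i) (r i).+1 \subset
     \big[@finset.setU _/finset.set0]_(i0 < k) Defs.arc (u i0) (r i0).+1.
    by apply: (@finset.bigcup_sup _ _ i xpredT (fun i0 => Defs.arc (u i0) (r i0).+1)).
  by rewrite hi arc_full.
rewrite mulr0 subr_le0 le_eqVlt; apply/orP; left; apply/eqP.
by apply: eq_bigr => i _; rewrite all mulr1.
Qed.

Lemma term_ub k (u r : {ffun 'I_k -> 'I_n}) :
  (\prod_(i < k) (n%:R^-1 * w (r i))) * (if cov u r then 1 else 0) <=
  \prod_(i < k) (n%:R^-1 * w (r i)) -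
  \prod_(i < k) (n%:R^-1 * w (r i) * (if Gc (u i) (r i) then 0 else 1)).
Proof.
have hge0 : forall j, 0 <= n%:R^-1 * w j :> R.
  by move=> j; rewrite mulr_ge0 ?w_ge0 // invr_ge0 ler0n.
case: ifP => hcov.
  have : ord0 \in \big[@finset.setU _/finset.set0]_(i < k) Defs.arc (u i) (r i).+1.
    by rewrite (eqP hcov) inE.
  move/finset.bigcupP => [i _ hi].
  by rewrite mulr1 [X in _ - X](bigD1 i) //= /Gc hi orbT mulr0 mul0r subr0.
rewrite mulr0 subr_ge0; apply: ler_prod => i _.
case: ifP => _; rewrite ?mulr0 ?mulr1 ?hge0 ?lexx //.
Qed.

Definition a_lo := \sum_(x : 'I_n) \sum_(j : 'I_n)
   n%:R^-1 * w j * (if j != ord_max then 1 else 0).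
Definition a_up := \sum_(x : 'I_n) \sum_(j : 'I_n)
   n%:R^-1 * w j * (if Gc x j then 0 else 1).

Lemma cover_lb k : 1 - a_lo ^+ k <= cover_prob p n k.
Proof.
have E1 := sum_ffun2_prod k (fun x j => n%:R^-1 * w j).
rewrite /= nV_mass expr1n in E1.
have E2 := sum_ffun2_prod k (fun x j => n%:R^-1 * w j * (if j != ord_max then 1 else 0)).
rewrite /= -/a_lo in E2.
rewrite cover_probE -[X in X - _]E1 -E2.
rewrite -sumrB; apply: ler_sum => u _; rewrite -sumrB; apply: ler_sum => r _.
exact: term_lb.
Qed.

Lemma cover_ub k : cover_prob p n k <= 1 - a_up ^+ k.
Proof.
have E1 := sum_ffun2_prod k (fun x j => n%:R^-1 * w j).
rewrite /= nV_mass expr1n in E1.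
have E2 := sum_ffun2_prod k (fun x j => n%:R^-1 * w j * (if Gc x j then 0 else 1)).
rewrite /= -/a_up in E2.
rewrite cover_probE -[X in _ <= X - _]E1 -E2.
rewrite -sumrB; apply: ler_sum => u _; rewrite -sumrB; apply: ler_sum => r _.
exact: term_ub.
Qed.


Lemma a_loE : a_lo = 1 - Rtail p n%:R.
Proof.
have S : \sum_j w j * (if j != ord_max then 1 else 0) = 1 - Rtail p n%:R.
  have ws := w_sum; rewrite (bigD1 ord_max) //= w_max in ws.
  rewrite (bigD1 ord_max) //= eqxx mulr0 add0r.
  under eq_bigr => j hj do rewrite hj mulr1.
  by rewrite -[X in X - _]ws addrAC subrr add0r.
rewrite /a_lo; under eq_bigr do under eq_bigr do rewrite -mulrA.
under eq_bigr do rewrite -mulr_sumr S.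
by rewrite sumr_const card_ord -[(n%:R^-1 * _) *+ _]mulr_natl mulrA mulfV ?mul1r // pnatr_eq0.
Qed.

Lemma a_up_ge0 : 0 <= a_up.
Proof.
apply: sumr_ge0 => x _; apply: sumr_ge0 => j _.
rewrite mulr_ge0 ?mulr_ge0 ?w_ge0 ?invr_ge0 ?ler0n //.
by case: ifP.
Qed.

Lemma cnt_G j : \sum_(x : 'I_n) (if Gc x j then 1 else 0 : R) <=
   (if j == ord_max then n else j.+1)%:R.
Proof.
rewrite /Gc; case: eqP => [_|_] /=.
  by rewrite sumr_const card_ord.
rewrite (eq_bigr (fun x => ((ord0 \in Defs.arc x j.+1) : nat)%:R)); last first.
  by move=> x _; case: (_ \in _).
by rewrite -natr_sum ler_nat; exact: arc0_count.
Qed.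

Lemma sum_wc : \sum_j n%:R^-1 * w j * (if j == ord_max then n else j.+1)%:R =
   Rtail p n%:R + n%:R^-1 * \sum_(r < n) r%:R * p r.
Proof.
rewrite big_ord_recr /= eqxx w_max [in RHS]big_ord_recl mul0r add0r.
have -> : n%:R^-1 * Rtail p n%:R * n%:R = Rtail p n%:R.
  by rewrite mulrAC mulVf ?mul1r // pnatr_eq0.
rewrite addrC mulr_sumr; congr (_ + _); apply: eq_bigr => j _.
have -> : (widen_ord (leqnSn n') j == ord_max) = false.
  by apply/negbTE; rewrite -val_eqE /= neq_ltn ltn_ord.
rewrite w_widen lift0; ring.
Qed.

Lemma a_up_bound : 1 - a_up <= Rtail p n%:R + n%:R^-1 * \sum_(r < n) r%:R * p r.
Proof.
rewrite -[X in X - _]nV_mass /a_up -sumrB.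
under eq_bigr do rewrite -sumrB.
have E : forall (x j : 'I_n), n%:R^-1 * w j - n%:R^-1 * w j * (if Gc x j then 0 else 1)
   = n%:R^-1 * w j * (if Gc x j then 1 else 0).
  by move=> x j; case: ifP => _; rewrite ?mulr0 ?mulr1 ?subr0 ?subrr.
under eq_bigr do under eq_bigr do rewrite E.
rewrite exchange_big /= -sum_wc; apply: ler_sum => j _.
rewrite -mulr_sumr; apply: ler_wpM2l; last exact: cnt_G.
by rewrite mulr_ge0 ?w_ge0 ?invr_ge0 ?ler0n.
Qed.

End Cover.
Lemma series_exp_cvg (R : realType) (x : R) : series (exp_coeff x) @ \oo --> expR x.
Proof. exact: is_cvg_series_exp_coeff. Qed.

Lemma pois_lim (R : realType) (s a : R) :
  series (fun k => expR (- s) * s ^+ k / (k`!)%:R * (1 - a ^+ k)) @ \oo -->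
  1 - expR (- s) * expR (s * a).
Proof.
have -> : series (fun k => expR (- s) * s ^+ k / (k`!)%:R * (1 - a ^+ k)) =
   (fun N => expR (- s) * series (exp_coeff s) N - expR (- s) * series (exp_coeff (s * a)) N).
  apply/funext => N; rewrite /series /= !mulr_sumr -sumrB; apply: eq_bigr => k _.
  rewrite /exp_coeff /= exprMn; ring.
have -> : 1 = expR (- s) * expR s by rewrite -expRD addNr expR0.
apply: cvgB; apply: cvgMr; exact: series_exp_cvg.
Qed.
Section CDF.
Variable R : realType.
Variable p : nat -> R.
Hypothesis p0 : p 0%N = 0.
Hypothesis pge0 : forall k, 0 <= p k.
Hypothesis pcvg : series p @ \oo --> (1 : R).
Variable n' : nat.
Local Notation n := n'.+1.

Lemma cdf_bounds (s : R) : 0 <= s ->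
  1 - expR (- s) * expR (s * (1 - Rtail p n%:R)) <= cdf_T p n s <=
  1 - expR (- s) * expR (s * a_up p n').
Proof.
move=> s0; rewrite /cdf_T ltNge s0 /=.
set pi := fun k => expR (- s) * s ^+ k / (k`!)%:R.
have pi0 : forall k, 0 <= pi k.
  by move=> k; rewrite /pi mulr_ge0 ?mulr_ge0 ?expR_ge0 ?exprn_ge0 ?invr_ge0 ?ler0n.
have q0 := Rtail_ge0 pge0 pcvg n%:R.
have q1 := Rtail_nat_le1 pge0 pcvg n.
have lo_le : forall k, pi k * (1 - (1 - Rtail p n%:R) ^+ k) <= pi k * cover_prob p n k.
  by move=> k; rewrite ler_wpM2l // -(a_loE p0 pcvg); exact: (cover_lb p0 pge0 pcvg).
have hi_le : forall k, pi k * cover_prob p n k <= pi k * (1 - (a_up p n') ^+ k).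
  by move=> k; rewrite ler_wpM2l //; exact: (cover_ub p0 pge0 pcvg).
have lo_ge0 : forall k, 0 <= pi k * (1 - (1 - Rtail p n%:R) ^+ k).
  move=> k; rewrite mulr_ge0 // subr_ge0 exprn_ile1 //; first by rewrite subr_ge0.
  by rewrite lerBlDr lerDl.
have x_ge0 : forall k, 0 <= pi k * cover_prob p n k.
  by move=> k; exact: le_trans (lo_ge0 k) (lo_le k).
have hi_ge0 : forall k, 0 <= pi k * (1 - (a_up p n') ^+ k).
  by move=> k; exact: le_trans (x_ge0 k) (hi_le k).
have lo_cvg := @pois_lim R s (1 - Rtail p n%:R).
have hi_cvg := @pois_lim R s (a_up p n').
have x_cvg : cvgn (series (fun k => pi k * cover_prob p n k)).
  by apply: (series_le_cvg x_ge0 hi_ge0 hi_le); apply/cvg_ex; eexists; exact: hi_cvg.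
apply/andP; split.
  rewrite -(cvg_lim _ lo_cvg) //; apply: ler_lim => //; first by apply/cvg_ex; eexists; exact: lo_cvg.
  by near=> N; apply: ler_sum => k _; exact: lo_le.
rewrite -(cvg_lim _ hi_cvg) //; apply: ler_lim => //; first by apply/cvg_ex; eexists; exact: hi_cvg.
by near=> N; apply: ler_sum => k _; exact: hi_le.
Unshelve. all: by end_near. Qed.
End CDF.
Lemma step_ineq (R : realType) (C eta hm hn fm fn m n : R) :
  0 <= C -> 0 <= eta -> eta <= 1/2 -> 0 <= m -> 2 * m <= n ->
  0 <= fm -> 0 <= fn -> fm <= (1 + eta) * fn ->
  hm <= C * (m * fm) -> hn <= hm + n * (fm - fn) ->
  hn <= (3/4 * C + eta) * (n * fn).
Proof.
move=> C0 e0 e1 m0 mn fm0 fn0 fmn hmC hnh.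
have n0 : 0 <= n by apply: le_trans mn; rewrite mulr_ge0.
have Y : m * fm <= 3/4 * (n * fn).
  apply: (le_trans (ler_pM m0 fm0 (lexx m) fmn)).
  have : m * ((1 + eta) * fn) <= (n / 2) * ((1 + eta) * fn).
    by apply: ler_wpM2r; [rewrite mulr_ge0 // addr_ge0 | lra].
  move/le_trans; apply.
  have -> : n / 2 * ((1 + eta) * fn) = (1 + eta) / 2 * (n * fn) by ring.
  by apply: ler_wpM2r; [rewrite mulr_ge0 | lra].
have Z : n * (fm - fn) <= eta * (n * fn).
  have : n * (fm - fn) <= n * (eta * fn) by apply: ler_wpM2l => //; lra.
  move/le_trans; apply; rewrite mulrCA lexx //.
have W : C * (m * fm) <= C * (3/4 * (n * fn)) by apply: ler_wpM2l.
have X0 : 0 <= n * fn by rewrite mulr_ge0.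
nra.
Qed.

Lemma key_ind (R : realType) (h f : nat -> R) (eta B : R) (N1 : nat) :
  (0 < N1)%N -> 0 <= eta -> eta <= 1/2 -> 0 <= B ->
  (forall n, 0 <= f n) ->
  (forall n, (N1 <= n)%N -> f (n %/ 2)%N <= (1 + eta) * f n) ->
  (forall m n, (m <= n)%N -> h n <= h m + n%:R * (f m - f n)) ->
  (forall n, (N1 <= n)%N -> (n < 2 * N1)%N -> h n <= B * (n%:R * f n)) ->
  forall j n, (2 ^ j * N1 <= n)%N -> h n <= ((3/4) ^+ j * B + 4 * eta) * (n%:R * f n).
Proof.
move=> N1p e0 e1 B0 f0 fhalf hrec hbase j n; elim/ltn_ind: n j => n IH j hjn.
have nfn0 : 0 <= n%:R * f n by rewrite mulr_ge0.
have N1n : (N1 <= n)%N.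
  by apply: leq_trans hjn; rewrite leq_pmull // expn_gt0.
case: (ltnP n (2 * N1)) => hn.
  have j0 : j = 0%N.
    case: j hjn => // j'; rewrite expnS -mulnA => hh; exfalso.
    have : (2 * N1 <= 2 * (2 ^ j' * N1))%N.
      by rewrite leq_mul2l /= leq_pmull // expn_gt0.
    lia.
  subst j; rewrite expr0 mul1r; apply: (le_trans (hbase n N1n hn)).
  by apply: ler_wpM2r => //; rewrite lerDl; lra.
set m := (n %/ 2)%N.
have mn : (m < n)%N by rewrite /m; lia.
have hjm : (2 ^ j.-1 * N1 <= m)%N.
  case: j hjn => [|j'] /=; first by rewrite /m mul1n => _; lia.
  rewrite expnS -mulnA; set Q := (2 ^ j' * N1)%N; rewrite /m; lia.
have hm := IH m mn j.-1 hjm.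
have C0 : 0 <= (3/4) ^+ j.-1 * B + 4 * eta.
  by rewrite addr_ge0 ?mulr_ge0 ?exprn_ge0 //; lra.
have := step_ineq C0 e0 e1 (ler0n _ m) _ (f0 m) (f0 n) (fhalf n N1n) hm (hrec m n (ltnW mn)).
have h2m : 2 * m%:R <= n%:R :> R.
  by rewrite -natrM ler_nat /m; lia.
move=> /(_ h2m) /le_trans; apply; apply: ler_wpM2r => //.
have : 3/4 * (3/4) ^+ j.-1 <= (3/4 : R) ^+ j.
  case: j {hjn hjm hm C0} => [|j'] /=; first by rewrite expr0 mulr1; lra.
  by rewrite exprS.
move=> H; have := ler_wpM2r B0 H; lra.
Qed.
Section Asym.
Variable R : realType.
Variable p : nat -> R.
Hypothesis p0 : p 0%N = 0.
Hypothesis pge0 : forall k, 0 <= p k.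
Hypothesis pcvg : series p @ \oo --> (1 : R).
Hypothesis sv : slowly_varying (Rtail p).

Local Notation f m := (Rtail p m%:R).
Definition hsum (m : nat) : R := \sum_(r < m) r%:R * p r.

Lemma h_rec m n : (m <= n)%N -> hsum n <= hsum m + n%:R * (f m - f n).
Proof.
move=> mn; rewrite (Rtail_natB pcvg mn) /hsum.
rewrite -!(big_mkord xpredT (fun r => r%:R * p r)) (big_cat_nat (leq0n m) mn) /=.
rewrite lerD2l mulr_sumr; apply: ler_sum_nat => r /andP[_ rn].
by apply: ler_wpM2r => //; rewrite ler_nat ltnW.
Qed.

Lemma h_crude n : hsum n <= n%:R.
Proof.
apply: (@le_trans _ _ (n%:R * series p n)); last first.
  by rewrite ler_piMr ?ler0n // (series_p_le1 pge0 pcvg).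
rewrite /hsum /series /= -(big_mkord xpredT (fun r => r%:R * p r)) mulr_sumr.
by apply: ler_sum_nat => r /andP[_ rn]; apply: ler_wpM2r => //; rewrite ler_nat ltnW.
Qed.

Lemma f_mono m n : (m <= n)%N -> f n <= f m.
Proof. by move=> mn; apply: (Rtail_le pge0 pcvg); rewrite ler_nat. Qed.

Lemma sv_near eta : 0 < eta -> eta <= 1/2 ->
  \forall n \near \oo, 0 < f n /\ Rtail p (n%:R * 3^-1) <= (1 + eta) * f n.
Proof.
move=> e0 e1; case: sv => _ _ H.
have := H 3^-1; rewrite invr_gt0 ltr0n => /(_ isT); rewrite powRr0.
move/cvgrPdist_lt => /(_ eta e0) Hn.
near=> n.
have hx : `|1 - Rtail p (n%:R * 3^-1) / f n| < eta.
  near: n; exact: (cvgr_idn Hn).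
have fn0 : f n != 0.
  apply/negP => /eqP fz; move: hx; rewrite fz invr0 mulr0 subr0 normr1 => hx; lra.
have fpos : 0 < f n by rewrite lt_neqAle eq_sym fn0 (Rtail_ge0 pge0 pcvg).
split => //.
move: hx; rewrite ltr_norml => /andP[hx _].
have : Rtail p (n%:R * 3^-1) / f n <= 1 + eta by lra.
by rewrite ler_pdivrMr.
Unshelve. all: by end_near. Qed.

Lemma h_small eps : 0 < eps -> \forall n \near \oo, hsum n <= eps * (n%:R * f n).
Proof.
move=> eps0.
set eta := Num.min (1/2) (eps / 8).
have e0 : 0 < eta by rewrite lt_min; apply/andP; split; lra.
have e1 : eta <= 1/2 by rewrite ge_min lexx.
have e2 : eta <= eps / 8 by rewrite ge_min lexx orbT.
case: (sv_near e0 e1) => N0 _ HN0.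
set N1 := maxn N0 2.
have N0N1 : (N0 <= N1)%N by rewrite leq_maxl.
have N1p : (0 < N1)%N by rewrite /N1; lia.
have fpos : forall n, (N1 <= n)%N -> 0 < f n.
  by move=> n hn; case: (HN0 n) => //=; apply: leq_trans hn.
have f2 : 0 < f (2 * N1)%N by apply: fpos; lia.
set B := (f (2 * N1)%N)^-1.
have B0 : 0 <= B by rewrite invr_ge0 ltW.
have fhalf : forall n, (N1 <= n)%N -> f (n %/ 2)%N <= (1 + eta) * f n.
  move=> n hn; case: (HN0 n) => [/=|_ H2]; first by apply: leq_trans hn.
  apply: le_trans H2; apply: (Rtail_le pge0 pcvg).
  rewrite ler_pdivrMr ?ltr0n // mulrC -natrM ler_nat; rewrite /N1 in hn; lia.
have hbase : forall n, (N1 <= n)%N -> (n < 2 * N1)%N -> hsum n <= B * (n%:R * f n).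
  move=> n h1 h2; apply: (le_trans (h_crude n)).
  have fn2 : f (2 * N1)%N <= f n by apply: f_mono; apply: ltnW.
  have -> : B * (n%:R * f n) = n%:R * (f n / f (2 * N1)%N) by rewrite /B; ring.
  by rewrite ler_peMr ?ler0n // ler_pdivlMr // mul1r.
have KI := key_ind N1p (ltW e0) e1 B0 (fun n => Rtail_ge0 pge0 pcvg n%:R) fhalf h_rec hbase.
have cv : ((3/4 : R) ^+ j * B) @[j --> \oo] --> 0.
  rewrite -(mul0r B); apply: cvgMl; apply: cvg_expr; rewrite ger0_norm; lra.
move/cvgrPdist_le: cv => /(_ (eps / 2)) []; first lra.
move=> J _ HJ.
have HJ' := HJ J (leqnn J); rewrite /= sub0r normrN in HJ'.
near=> n.
have hn : (2 ^ J * N1 <= n)%N by near: n; exact: nbhs_infty_ge.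
apply: (le_trans (KI J n hn)); apply: ler_wpM2r.
  by rewrite mulr_ge0 ?ler0n // (Rtail_ge0 pge0 pcvg).
have := ler_norm ((3/4 : R) ^+ J * B); lra.
Unshelve. all: by end_near. Qed.
End Asym.
Lemma final_bound (R : realType) (p : nat -> R) (n : nat) (t eps : R) :
  p 0%N = 0 -> (forall k, 0 <= p k) -> series p @ \oo --> (1 : R) ->
  (0 < n)%N -> 0 <= t -> 0 <= eps -> 0 < Rtail p n%:R ->
  hsum p n <= eps * (n%:R * Rtail p n%:R) ->
  `|(1 - expR (- t)) - cdf_scaled_T p n (Rtail p n%:R) t| <= t * eps.
Proof.
move=> p0 pge0 pcvg; case: n => // n' _ t0 eps0 q0 hq.
set q := Rtail p n'.+1%:R in q0 hq *.
rewrite /cdf_scaled_T q0.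
set s := t / q.
have s0 : 0 <= s by rewrite /s divr_ge0 // ltW.
have sq : s * q = t by rewrite /s divfK // gt_eqF.
have /andP[lo hi] := cdf_bounds p0 pge0 pcvg n' s0.
rewrite -/q -expRD in lo; rewrite -expRD in hi.
have E0 : - s + s * (1 - q) = - t by rewrite -sq; ring.
rewrite E0 in lo.
have hb := a_up_bound p0 pge0 pcvg n'.
rewrite -/q in hb.
set a := a_up p n' in hi hb.
have n0 : 0 < n'.+1%:R :> R by rewrite ltr0n.
have r1 : hsum p n'.+1 / (n'.+1%:R * q) <= eps.
  by rewrite ler_pdivrMr ?mulr_gt0.
have e1 : s * (n'.+1%:R^-1 * hsum p n'.+1) = t * (hsum p n'.+1 / (n'.+1%:R * q)).
  rewrite -sq /s; field; apply/andP; split; rewrite gt_eqF //.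
have e2 : - t - t * eps <= - s + s * a.
  have h2 : s * (1 - a) <= s * q + s * (n'.+1%:R^-1 * hsum p n'.+1).
    by rewrite -mulrDr; apply: ler_wpM2l.
  rewrite sq e1 in h2.
  have h1 : t * (hsum p n'.+1 / (n'.+1%:R * q)) <= t * eps by apply: ler_wpM2l.
  have h3 : - s + s * a = - (s * (1 - a)) by ring.
  by rewrite h3 -opprD lerN2; apply: le_trans h2 _; rewrite lerD2l.
have e3 : expR (- t) * (1 - t * eps) <= expR (- s + s * a).
  apply: le_trans (_ : expR (- t - t * eps) <= _); last by rewrite ler_expR.
  rewrite expRD ler_wpM2l ?expR_ge0 //.
  exact: expR_ge1Dx.
have e4 : expR (- t) <= 1 by rewrite -expR0 ler_expR; lra.
have te : 0 <= t * eps by rewrite mulr_ge0.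
have e5 : expR (- t) * (t * eps) <= t * eps by rewrite ler_piMl // expR_ge0.
rewrite ler_distlC; apply/andP; split.
  have h4 : expR (- t) * (1 - t * eps) = expR (- t) - expR (- t) * (t * eps) by ring.
  lra.
lra.
Qed.
Theorem theoremD (R : realType) (p : nat -> R) :
  radius_pmf p -> slowly_varying (Rtail p) ->
  forall t : R,
    cdf_scaled_T p n (Rtail p n%:R) t @[n --> \oo] --> exp1_cdf t.
Proof.
case=> p0 pge0 pcvg sv t.
have hpos : \forall n \near \oo, 0 < Rtail p n%:R.
  have h12 : (0 : R) < 1/2 by lra.
  have := sv_near pge0 pcvg sv h12 (lexx _).
  by apply: filterS => n [].
apply/cvgrPdist_le => e e0.
case: (ltrP t 0) => ht.
  rewrite /exp1_cdf leNgt ht /=.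
  near=> n.
  have qn : 0 < Rtail p n%:R by near: n.
  rewrite /cdf_scaled_T qn /cdf_T.
  have -> : t / Rtail p n%:R < 0 by rewrite pmulr_llt0 // invr_gt0.
  by rewrite subrr normr0 ltW.
rewrite /exp1_cdf ht.
set eps := e / (t + 1).
have eps0 : 0 < eps by rewrite divr_gt0 //; lra.
have hs := h_small pge0 pcvg sv eps0.
near=> n.
have qn : 0 < Rtail p n%:R by near: n.
have n1 : (0 < n)%N by near: n; exact: nbhs_infty_ge.
have hh : hsum p n <= eps * (n%:R * Rtail p n%:R) by near: n.
apply: le_trans (final_bound p0 pge0 pcvg n1 ht (ltW eps0) qn hh) _.
have : t * eps <= e.
  rewrite /eps mulrA ler_pdivrMr; last by lra.
  by rewrite mulrDr mulr1 mulrC lerDl ltW.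
by [].
Unshelve. all: by end_near. Qed.
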